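(* Let $X$ be a Banach space, $A=(a_{nk})_{n,k\in\mathbb{N}}$ a positive regular matrix, $B$ a subset of $B_{X^{*}}$ that (I)-generates $B_{X^{*}}$, and $\mathbf{p}=(p_k)_{k\in\mathbb{N}}$ a sequence of real numbers with $\inf_k p_k>0$ and $\sup_k p_k<\infty$. Then a bounded sequence $(x_k)_{k\in\mathbb{N}}$ in $X$ is such that $(x^{*}(x_k))_{k}$ is strongly $A$-$\mathbf{p}$-convergent to $x^{*}(x)$ for every $x^{*}\in X^{*}$ if and only if $(x^{*}(x_k))_{k}$ is strongly $A$-$\mathbf{p}$-convergent to $x^{*}(x)$ for every $x^{*}\in B$ (here $x\in X$). The same statement holds with strong $A$-$\mathbf{p}$-convergence replaced by $A$-statistical convergence.
   Context: A complex matrix $A=(a_{nk})$ is regular if $\sup_n\sum_k|a_{nk}|<\infty$, $\lim_n\sum_k a_{nk}=1$ and $\lim_n a_{nk}=0$ for all $k$; positive means $a_{nk}\geq0$. A scalar sequence $(s_k)$ is strongly $A$-$\mathbf{p}$-convergent to $s$ if $\sum_k a_{nk}|s_k-s|^{p_k}<\infty$ for every $n$ and $\lim_{n\to\infty}\sum_k a_{nk}|s_k-s|^{p_k}=0$. It is $A$-statistically convergent to $s$ if for every $\varepsilon>0$, $\lim_{n\to\infty}\sum_k a_{nk}\chi_{B_\varepsilon}(k)=0$ where $B_\varepsilon=\{k:|s_k-s|\geq\varepsilon\}$. A subset $B\subseteq B_{X^*}$ (I)-generates $B_{X^*}$ if whenever $B=\bigcup_{n=1}^\infty B_n$, $B_{X^*}$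 equals the norm-closure of the convex hull of $\bigcup_n\overline{\mathrm{co}}^{w^*}(B_n)$ (weak*-closed convex hulls). *)

(* Defs.v *)
From HB Require Import structures.
From mathcomp Require Import all_boot all_order all_algebra.
From mathcomp Require Import all_classical all_reals all_analysis.
From mathcomp Require Export complex.
Set Implicit Arguments. Unset Strict Implicit. Unset Printing Implicit Defensive.
Import Order.TTheory GRing.Theory Num.Theory.
Import numFieldNormedType.Exports.
Local Open Scope classical_set_scope.
Local Open Scope ring_scope.

Section DualSpace.
Variables (K : numFieldType) (X : normedModType K).

Definition dual : set (X -> K) :=
  [set f | (forall (a : K) (x y : X), f (a *: x + y) = a * f x + f y)
           /\ continuous f].

Definition dual_ball : set (X -> K) :=
  [set f | dual f /\ forall x : X, `|f x| <= `|x|].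

(* convex hull: finite convex combinations (nonnegative, hence real, weights) *)
Definition conv_hull (S : set (X -> K)) : set (X -> K) :=
  [set f | exists (m : nat) (g : 'I_m -> X -> K) (l : 'I_m -> K),
     [/\ forall i, S (g i), forall i, 0 <= l i, \sum_(i < m) l i = 1
       & forall x, f x = \sum_(i < m) l i * g i x]].

(* closure in X^* for the weak* topology sigma(X^*, X) *)
Definition wstar_closure (S : set (X -> K)) : set (X -> K) :=
  [set f | dual f /\ forall (m : nat) (xs : 'I_m -> X) (e : K), 0 < e ->
     exists g, S g /\ forall i, `|f (xs i) - g (xs i)| < e].

Definition wstar_cconv_hull (S : set (X -> K)) : set (X -> K) :=
  wstar_closure (conv_hull S).

(* closure in X^* for the dual norm: ||f - g|| <= e iff |f x - g x| <= e ||x|| *)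
Definition norm_closure (S : set (X -> K)) : set (X -> K) :=
  [set f | dual f /\ forall e : K, 0 < e ->
     exists g, S g /\ forall x : X, `|f x - g x| <= e * `|x|].

Definition I_generates (B : set (X -> K)) : Prop :=
  forall Bn : nat -> set (X -> K), B = \bigcup_n Bn n ->
    dual_ball = norm_closure (conv_hull (\bigcup_n wstar_cconv_hull (Bn n))).

End DualSpace.
Arguments dual {K} X.
Arguments dual_ball {K} X.

Section Summability.
Variable R : realType.

Definition positive_matrix (A : nat -> nat -> R) : Prop :=
  forall n k, 0 <= A n k.

Definition regular (A : nat -> nat -> R) : Prop :=
  [/\ exists M : R, forall n N, \sum_(k < N) `|A n k| <= M,
      (fun n => limn (series (A n))) @ \oo --> (1 : R)
    & forall k, (fun n => A n k) @ \oo --> (0 : R)].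

Local Open Scope ereal_scope.

(* Strong A-p-convergence of s : nat -> K to l, with modulus nrm : K -> R.
   The series have nonnegative terms when A is positive (the only case used). *)
Definition strong_Ap_cvg (K : zmodType) (nrm : K -> R)
    (A : nat -> nat -> R) (p : nat -> R) (s : nat -> K) (l : K) : Prop :=
  let T := fun n => \sum_(k <oo) ((A n k * (nrm (s k - l)%R) `^ (p k))%R)%:E in
  (forall n, T n < +oo) /\ T @ \oo --> 0.

Definition A_stat_cvg (K : zmodType) (nrm : K -> R)
    (A : nat -> nat -> R) (s : nat -> K) (l : K) : Prop :=
  forall eps : R, (0 < eps)%R ->
    (fun n => \sum_(k <oo)
        ((A n k * \1_[set j | eps <= nrm (s j - l)]%R k)%R)%:E) @ \oo --> 0.

End Summability.

(* Main.v *)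
Set Warnings "-all".
Require Import Defs.
From HB Require Import structures.
From mathcomp Require Import all_boot all_order all_algebra.
From mathcomp Require Import all_classical all_reals all_analysis.
From mathcomp Require Import complex.
From mathcomp Require Import ring lra.
Import Order.TTheory GRing.Theory Num.Theory Num.Def.
Import numFieldNormedType.Exports.
Local Open Scope classical_set_scope.
Local Open Scope ring_scope.
Local Open Scope ereal_scope.
Lemma ser_le (R : realType) (u : nat -> R) (e : R) :
  (forall k, (0 <= u k)%R) -> (forall N, (\sum_(k < N) u k <= e)%R) ->
  \sum_(k <oo) (u k)%:E <= e%:E.
Proof.
move=> u0 hN; apply: lime_le.
  by apply: is_cvg_nneseries => k _; rewrite lee_fin.
by apply: nearW => N; rewrite /= sumEFin big_mkord lee_fin.
Qed.

Lemma ser_ge (R : realType) (u : nat -> R) N :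
  (forall k, (0 <= u k)%R) -> (\sum_(k < N) u k)%:E <= \sum_(k <oo) (u k)%:E.
Proof.
move=> u0.
have := @nneseries_lim_ge R (fun k => (u k)%:E) xpredT 0 N.
rewrite big_mkord sumEFin; apply => k _ _; by rewrite lee_fin.
Qed.

Lemma ser_ge0 (R : realType) (u : nat -> R) :
  (forall k, (0 <= u k)%R) -> 0 <= \sum_(k <oo) (u k)%:E.
Proof. by move=> u0; apply: nneseries_ge0 => k _; rewrite lee_fin. Qed.

Definition Zc {R : realType} (T : nat -> \bar R) :=
  forall e : R, (0 < e)%R -> \forall n \near \oo, T n <= e%:E.

Lemma cvg0P {R : realType} {T : nat -> \bar R} :
  (forall n, 0 <= T n) -> (T @ \oo --> 0) <-> Zc T.
Proof.
move=> T0; split.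
  move/fine_cvgP => [Hf /cvgrPdist_le Hc] e e0.
  have := Hc e e0; apply: filterS2 Hf => n Tf.
  rewrite sub0r normrN /= => he.
  rewrite -(fineK Tf) lee_fin; apply: le_trans he; exact: ler_norm.
move=> HZ; apply/fine_cvgP; split.
  have := HZ 1%R ltr01; apply: filterS => n hn.
  rewrite ge0_fin_numE //; exact: le_lt_trans hn (ltry _).
apply/cvgrPdist_le => e e0.
have := HZ e e0; apply: filterS => n hn.
have Tf : T n \is a fin_num by rewrite ge0_fin_numE //; exact: le_lt_trans hn (ltry _).
rewrite sub0r normrN /= ger0_norm; last by rewrite fine_ge0.
by rewrite -lee_fin fineK.
Qed.
Local Open Scope ring_scope.
Lemma pw_I1 (R : realType) (t L d c p C : R) :
  (0 <= t)%R -> (t <= L)%R -> (0 < d <= 1)%R -> (0 <= c <= p)%R -> (p <= C)%R ->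
  (t `^ p <= d `^ c + (1 + L) `^ C * ((d <= t)%R)%:R)%R.
Proof.
move=> t0 tL /andP[d0 d1] /andP[c0 cp] pC.
have L0 : (0 <= L)%R by apply: le_trans tL.
case: (boolP (d <= t)%R) => hd.
  rewrite mulr1; apply: (@le_trans _ _ ((1 + L) `^ C)); last by rewrite lerDr powR_ge0.
  apply: (@le_trans _ _ ((1 + L) `^ p)).
    apply: ge0_ler_powR; rewrite ?nnegrE ?(le_trans c0 cp) ?addr_ge0 //.
    by rewrite (le_trans tL) // lerDr.
  by apply: (ler_powR _ pC); rewrite lerDl.
rewrite mulr0 addr0; move: hd; rewrite -ltNge => td.
apply: (@le_trans _ _ (d `^ p)).
  by apply: ge0_ler_powR; rewrite ?nnegrE ?(le_trans c0 cp) ?(ltW d0) ?(ltW td).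
by apply: (ger_powR _ cp); rewrite d0 d1.
Qed.

Lemma pw_I2 (R : realType) (t e p C : R) :
  (0 <= t)%R -> (0 < e)%R -> (0 <= p <= C)%R ->
  ((e <= t)%R%:R <= t `^ p / (minr e 1) `^ C)%R.
Proof.
move=> t0 e0 /andP[p0 pC].
have m0 : (0 < minr e 1)%R by rewrite lt_min e0 ltr01.
have q0 : (0 < (minr e 1) `^ C)%R by apply: powR_gt0.
case: (boolP (e <= t)%R) => he; last by rewrite divr_ge0 ?powR_ge0 ?ltW.
rewrite ler_pdivlMr // mul1r.
apply: (@le_trans _ _ ((minr e 1) `^ p)).
  by apply: (ger_powR _ pC); rewrite m0 ge_min lexx orbT.
apply: ge0_ler_powR; rewrite ?nnegrE ?(ltW m0) //.
by rewrite ge_min he.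
Qed.
Lemma indE (R : realType) (t : nat -> R) (e : R) k :
  \1_[set j | e <= t j] k = ((e <= t k)%R)%:R :> R.
Proof.
rewrite indicE; case: (boolP (e <= t k)) => h.
  by rewrite mem_set.
by rewrite memNset //= => h'; rewrite h' in h.
Qed.

Lemma ind_ge0 (R : realType) (t : nat -> R) (e : R) k :
  0 <= \1_[set j | e <= t j] k :> R.
Proof. by rewrite indE ler0n. Qed.

Lemma sum_le_ser {R : realType} {u : nat -> R} (N : nat) {b : R} :
  (forall k, 0 <= u k) -> (\sum_(k <oo) (u k)%:E <= b%:E)%E ->
  \sum_(k < N) u k <= b.
Proof.
move=> u0 h; rewrite -lee_fin; apply: le_trans h; exact: ser_ge.
Qed.

Lemma M_ge0 {R : realType} {A : nat -> nat -> R} {M : R} :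
  (forall n N, \sum_(k < N) A n k <= M) -> 0 <= M.
Proof. by move=> hM; have := hM 0%N 0%N; rewrite big_ord0. Qed.

Lemma SP_fin {R : realType} {A : nat -> nat -> R} {p t : nat -> R} {M L C : R} :
  (forall n k, 0 <= A n k) -> (forall n N, \sum_(k < N) A n k <= M) ->
  (forall k, 0 <= t k <= L) -> (forall k, 0 <= p k <= C) ->
  forall n, (\sum_(k <oo) (A n k * t k `^ p k)%:E < +oo)%E.
Proof.
move=> A0 hM ht hp n.
apply: (@le_lt_trans _ _ ((M * (1 + L) `^ C)%:E)); last exact: ltry.
apply: ser_le => [k|N]; first by rewrite mulr_ge0 ?powR_ge0.
apply: (@le_trans _ _ (\sum_(k < N) A n k * (1 + L) `^ C)); last first.
  by rewrite -mulr_suml ler_wpM2r ?powR_ge0.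
apply: ler_sum => k _; rewrite ler_wpM2l //.
have /andP[t0 tL] := ht k; have /andP[p0 pC] := hp k.
have L0 : 0 <= L by apply: le_trans tL.
apply: (@le_trans _ _ ((1 + L) `^ p k)).
  apply: ge0_ler_powR; rewrite ?nnegrE ?addr_ge0 //.
  by rewrite (le_trans tL) // lerDr.
by apply: (ler_powR _ pC); rewrite lerDl.
Qed.

Lemma stat_to_SP {R : realType} {A : nat -> nat -> R} {p t : nat -> R} {M L c C : R} :
  (forall n k, 0 <= A n k) -> (forall n N, \sum_(k < N) A n k <= M) ->
  (forall k, 0 <= t k <= L) -> 0 < c -> (forall k, c <= p k <= C) ->
  (forall e, 0 < e -> Zc (fun n => \sum_(k <oo) (A n k * \1_[set j | e <= t j] k)%:E)) ->
  Zc (fun n => \sum_(k <oo) (A n k * t k `^ p k)%:E).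
Proof.
move=> A0 hM ht c0 hp hS e e0.
have M0 := M_ge0 hM.
set D := M + 1; have D0 : 0 < D by rewrite /D ltr_wpDl.
set Lp := (1 + L) `^ C; have Lp0 : 0 <= Lp by rewrite powR_ge0.
set d := minr 1 ((e / (2 * D)) `^ c^-1).
have ed0 : 0 < e / (2 * D) by rewrite divr_gt0 ?mulr_gt0.
have d0 : 0 < d by rewrite lt_min ltr01 powR_gt0.
have d1 : d <= 1 by rewrite ge_min lexx.
have hd : d `^ c <= e / (2 * D).
  apply: (@le_trans _ _ (((e / (2 * D)) `^ c^-1) `^ c)).
    apply: ge0_ler_powR; rewrite ?nnegrE ?(ltW c0) ?(ltW d0) ?powR_ge0 //.
    by rewrite ge_min lexx orbT.
  by rewrite -powRrM mulVf ?gt_eqF // powRr1 ?(ltW ed0).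
have e'0 : 0 < e / (2 * (Lp + 1)) by rewrite divr_gt0 ?mulr_gt0 ?ltr_wpDl.
have := hS d d0 (e / (2 * (Lp + 1))) e'0; apply: filterS => n hn.
apply: ser_le => [k|N]; first by rewrite mulr_ge0 ?powR_ge0.
have hind := sum_le_ser N (fun k => mulr_ge0 (A0 n k) (ind_ge0 _ _ _ k)) hn.
apply: (@le_trans _ _ (\sum_(k < N) (d `^ c * A n k + Lp * (A n k * \1_[set j | d <= t j] k)))).
  apply: ler_sum => k _.
  have /andP[t0 tL] := ht k; have /andP[cp pC] := hp k.
  rewrite indE mulrCA [d `^ c * _]mulrC -mulrDr ler_wpM2l //.
  by apply: pw_I1 => //; rewrite ?d0 ?d1 ?(ltW c0) //.
rewrite big_split /= -!mulr_sumr.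
rewrite [e](splitr e) lerD //.
  apply: (@le_trans _ _ (e / (2 * D) * M)).
    by rewrite ler_pM ?powR_ge0 ?sumr_ge0 //; apply: hM.
  apply: (@le_trans _ _ (e / 2 * (M / D))).
    by rewrite le_eqVlt; apply/orP; left; apply/eqP; field; rewrite gt_eqF.
  apply: ler_piMr; first by rewrite divr_ge0 // ltW.
  by rewrite ler_pdivrMr // mul1r /D lerDl.
apply: (@le_trans _ _ (Lp * (e / (2 * (Lp + 1))))).
  by rewrite ler_wpM2l.
apply: (@le_trans _ _ (e / 2 * (Lp / (Lp + 1)))).
  by rewrite le_eqVlt; apply/orP; left; apply/eqP; field; rewrite gt_eqF // ltr_wpDl.
apply: ler_piMr; first by rewrite divr_ge0 // ltW.
by rewrite ler_pdivrMr ?ltr_wpDl // mul1r lerDl.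
Qed.
Lemma SP_to_stat {R : realType} {A : nat -> nat -> R} {p t : nat -> R} {C : R} :
  (forall n k, 0 <= A n k) ->
  (forall k, 0 <= t k) -> (forall k, 0 <= p k <= C) ->
  Zc (fun n => \sum_(k <oo) (A n k * t k `^ p k)%:E) ->
  (forall e, 0 < e -> Zc (fun n => \sum_(k <oo) (A n k * \1_[set j | e <= t j] k)%:E)).
Proof.
move=> A0 t0 hp hZ e e0 e1 e10.
have m0 : 0 < minr e 1 by rewrite lt_min e0 ltr01.
set q := (minr e 1) `^ C; have q0 : 0 < q by apply: powR_gt0.
have := hZ (e1 * q) (mulr_gt0 e10 q0); apply: filterS => n hn.
apply: ser_le => [k|N]; first by rewrite mulr_ge0 ?ind_ge0.
have hs := sum_le_ser N (fun k => mulr_ge0 (A0 n k) (powR_ge0 (t k) (p k))) hn.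
apply: (@le_trans _ _ (\sum_(k < N) A n k * (t k `^ p k / q))).
  apply: ler_sum => k _; rewrite indE ler_wpM2l //.
  exact: pw_I2.
under eq_bigr do rewrite mulrA.
by rewrite -mulr_suml ler_pdivrMr.
Qed.
Lemma lin0 {K : numFieldType} {X : normedModType K} {f : X -> K} : (forall (a : K) (x y : X), f (a *: x + y) = a * f x + f y) -> f 0 = 0.
Proof.
move=> hl; have := hl 1 0 0; rewrite scaler0 addr0 mul1r => h.
by have := congr1 (fun z => z - f 0) h; rewrite /= subrr addrK.
Qed.
Lemma linZ {K : numFieldType} {X : normedModType K} {f : X -> K} : (forall (a : K) (x y : X), f (a *: x + y) = a * f x + f y) ->
  forall a y, f (a *: y) = a * f y.
Proof. by move=> hl a y; have := hl a y 0; rewrite addr0 lin0 // addr0. Qed.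
Lemma linB {K : numFieldType} {X : normedModType K} {f : X -> K} : (forall (a : K) (x y : X), f (a *: x + y) = a * f x + f y) ->
  forall y z, f (y - z) = f y - f z.
Proof.
move=> hl y z; have := hl (-1) z y; rewrite scaleN1r addrC => ->.
by rewrite mulN1r addrC.
Qed.

Lemma dual_bound {K : numFieldType} {X : normedModType K} {f : X -> K} :
  dual X f -> exists k : K, 0 < k /\ forall y, `|f y| <= k * `|y|.
Proof.
move=> [hl hc].
have f0 := lin0 hl.
have := hc 0; move=> /cvgrPdist_lt /(_ 1 ltr01) /nbhs_norm0P [d /= d0 hd].
exists (2 / d); split; first by rewrite divr_gt0.
move=> y; have [y0|y0] := eqVneq `|y| 0.
  by move/normr0_eq0: y0 => ->; rewrite f0 !normr0 mulr0.
have ny0 : 0 < `|y| by rewrite lt_neqAle eq_sym y0 normr_ge0.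
set a := d / (2 * `|y|).
have a0 : 0 < a by rewrite divr_gt0 // mulr_gt0.
have := hd (a *: y); rewrite /= f0 sub0r normrN (linZ hl) normrM gtr0_norm //.
rewrite normrZ gtr0_norm // => h.
have : a * `|f y| < 1.
  apply: h.
  have -> : a * `|y| = d / 2 by rewrite /a; field; rewrite gt_eqF.
  by rewrite ltr_pdivrMr // ltr_pMr // ltr1n.
move=> h2.
have -> : 2 / d * `|y| = a^-1 by rewrite /a; field; rewrite ?gt_eqF.
by rewrite -(ler_pM2l a0) mulfV ?gt_eqF // ltW.
Qed.
Record NrmOK {R : realType} {K : numFieldType} (nrm : K -> R) (emb : R -> K) : Prop := {
  n_ge0 : forall u, 0 <= nrm u;
  n_D : forall u v, nrm (u + v) <= nrm u + nrm v;
  n_mono : forall u v, `|u| <= `|v| -> nrm u <= nrm v;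
  n_M : forall u v, nrm (u * v) = nrm u * nrm v;
  n_emb : forall r, 0 < r -> 0 < emb r;
  n_embE : forall r, 0 < r -> nrm (emb r) = r;
  n_add : forall u v, 0 <= u -> 0 <= v -> nrm (u + v) = nrm u + nrm v;
  n_1 : nrm 1 = 1;
  n_0 : nrm 0 = 0 }.
Arguments n_ge0 {R K nrm emb}. Arguments n_D {R K nrm emb}. Arguments n_mono {R K nrm emb}.
Arguments n_M {R K nrm emb}. Arguments n_emb {R K nrm emb}. Arguments n_embE {R K nrm emb}.
Arguments n_add {R K nrm emb}. Arguments n_1 {R K nrm emb}. Arguments n_0 {R K nrm emb}.

Lemma n_N {R : realType} {K : numFieldType} {nrm : K -> R} {emb : R -> K}
  (H : NrmOK nrm emb) u : nrm (- u) = nrm u.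
Proof. by apply/le_anti; rewrite !(n_mono H) // normrN. Qed.

Lemma n_B {R : realType} {K : numFieldType} {nrm : K -> R} {emb : R -> K}
  (H : NrmOK nrm emb) u v : nrm (u - v) <= nrm u + nrm v.
Proof. by rewrite -(n_N H v); apply: (n_D H). Qed.

Lemma n_sum {R : realType} {K : numFieldType} {nrm : K -> R} {emb : R -> K}
  (H : NrmOK nrm emb) m (l : 'I_m -> K) :
  (forall i, 0 <= l i) -> nrm (\sum_(i < m) l i) = \sum_(i < m) nrm (l i).
Proof.
move=> l0.
suff : 0 <= \sum_(i < m) l i /\ nrm (\sum_(i < m) l i) = \sum_(i < m) nrm (l i) by case.
apply: (big_rec2 (fun y1 y2 => 0 <= y1 /\ nrm y1 = y2)); first by rewrite (n_0 H).
by move=> i y1 y2 _ [y10 <-]; rewrite addr_ge0 // (n_add H).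
Qed.

Lemma n_sumle {R : realType} {K : numFieldType} {nrm : K -> R} {emb : R -> K}
  (H : NrmOK nrm emb) m (l : 'I_m -> K) :
  nrm (\sum_(i < m) l i) <= \sum_(i < m) nrm (l i).
Proof.
apply: (big_rec2 (fun y1 y2 => nrm y1 <= y2)); first by rewrite (n_0 H).
move=> i y1 y2 _ h; apply: le_trans; first exact: (n_D H).
by rewrite lerD2l.
Qed.

Definition PS {R : realType} {K : numFieldType} {X : Type} (nrm : K -> R)
  (A : nat -> nat -> R) (xs : nat -> X) (x : X) (g : X -> K) n N :=
  \sum_(k < N) A n k * nrm (g (xs k) - g x).

Definition Cset {R : realType} {K : numFieldType} {X : Type} (nrm : K -> R)
  (A : nat -> nat -> R) (xs : nat -> X) (x : X) (m : nat) (eps : R) : set (X -> K) :=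
  [set g | forall n, (m <= n)%N -> forall N, PS nrm A xs x g n N <= eps].

Lemma conv_mono {K : numFieldType} {X : normedModType K} (S T : set (X -> K)) :
  S `<=` T -> conv_hull S `<=` conv_hull T.
Proof.
move=> ST f [m [g [l [gS l0 l1 hf]]]]; exists m, g, l; split => // i; exact: ST.
Qed.

Lemma Cset_mono {R : realType} {K : numFieldType} {X : Type} (nrm : K -> R) A xs
  (x : X) m m' eps : (m <= m')%N -> Cset nrm A xs x m eps `<=` Cset nrm A xs x m' eps.
Proof. by move=> mm g hg n hn; apply: hg; apply: leq_trans hn. Qed.

Lemma conv_C {R : realType} {K : numFieldType} {nrm : K -> R} {emb : R -> K}
  (H : NrmOK nrm emb) {X : normedModType K} (A : nat -> nat -> R) xs (x : X) m eps :
  (forall n k, 0 <= A n k) ->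
  conv_hull (Cset nrm A xs x m eps) `<=` Cset nrm A xs x m eps.
Proof.
move=> A0 f [m' [g [l [gS l0 l1 hf]]]] n hn N.
rewrite /PS.
apply: (@le_trans _ _ (\sum_(k < N) A n k * \sum_(i < m') nrm (l i) * nrm (g i (xs k) - g i x))).
  apply: ler_sum => k _; rewrite ler_wpM2l //.
  rewrite !hf -sumrB.
  apply: le_trans; first exact: (n_sumle H).
  apply: ler_sum => i _.
  by rewrite -mulrBr (n_M H).
under eq_bigr do rewrite mulr_sumr.
rewrite exchange_big /=.
apply: (@le_trans _ _ (\sum_(i < m') nrm (l i) * eps)).
  apply: ler_sum => i _.
  under eq_bigr do rewrite mulrCA.
  rewrite -mulr_sumr ler_wpM2l ?(n_ge0 H) //.
  exact: gS.
by rewrite -mulr_suml -(n_sum H) // l1 (n_1 H) mul1r.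
Qed.
Lemma conv_union {R : realType} {K : numFieldType} {nrm : K -> R} {emb : R -> K}
  (H : NrmOK nrm emb) {X : normedModType K} (A : nat -> nat -> R) xs (x : X) eps :
  (forall n k, 0 <= A n k) ->
  conv_hull (\bigcup_m Cset nrm A xs x m eps) `<=` \bigcup_m Cset nrm A xs x m eps.
Proof.
move=> A0 f [m' [g [l [gS l0 l1 hf]]]].
have : forall i : 'I_m', exists mi, Cset nrm A xs x mi eps (g i).
  by move=> i; have [mi _ hmi] := gS i; exists mi.
move=> /choice [mi hmi].
exists (\max_(i < m') mi i) => //.
apply: (conv_C H _ _ _ _ _ A0); exists m', g, l; split => // i.
apply: Cset_mono (hmi i); exact: leq_bigmax.
Qed.

Lemma wstar_C {R : realType} {K : numFieldType} {nrm : K -> R} {emb : R -> K}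
  (H : NrmOK nrm emb) {X : normedModType K} (A : nat -> nat -> R) xs (x : X) m eps M :
  (forall n k, 0 <= A n k) -> (forall n N, \sum_(k < N) A n k <= M) ->
  wstar_closure (Cset nrm A xs x m eps) `<=` Cset nrm A xs x m eps.
Proof.
move=> A0 hM f [fd hf] n hn N; rewrite /PS.
have M0 := M_ge0 hM.
apply/ler_addgt0Pr => e e0.
set d := e / (2 * (M + 1)).
have d0 : 0 < d by rewrite divr_gt0 // mulr_gt0 // ltr_wpDl.
pose pts : 'I_N.+1 -> X := fun i => if (i < N)%N then xs i else x.
have [g [gC hg]] := hf N.+1 pts (emb d) (n_emb H d d0).
have hpt : forall i, nrm (f (pts i) - g (pts i)) <= d.
  move=> i; rewrite -(n_embE H d d0); apply: (n_mono H).
  by rewrite (gtr0_norm (n_emb H _ d0)) ltW.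
have hk : forall k : 'I_N, nrm (f (xs k) - f x) <= nrm (g (xs k) - g x) + (d + d).
  move=> k.
  have e1 := hpt (widen_ord (leqnSn N) k); have e2 := hpt ord_max.
  rewrite /pts /= ltn_ord in e1; rewrite /pts /= ltnn in e2.
  have -> : f (xs k) - f x = (g (xs k) - g x) + ((f (xs k) - g (xs k)) - (f x - g x)).
    by ring.
  apply: le_trans; first exact: (n_D H).
  rewrite lerD2l; apply: le_trans; first exact: (n_B H).
  exact: lerD.
apply: (@le_trans _ _ (\sum_(k < N) (A n k * nrm (g (xs k) - g x) + (d + d) * A n k))).
  apply: ler_sum => k _; rewrite [_ * A n k]mulrC -mulrDr ler_wpM2l //.
rewrite big_split /= -mulr_sumr lerD //; first exact: gC.
apply: (@le_trans _ _ ((d + d) * M)); first by rewrite ler_wpM2l ?addr_ge0 ?(ltW d0) //; apply: hM.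
apply: (@le_trans _ _ (e * (M / (M + 1)))).
  by rewrite le_eqVlt; apply/orP; left; apply/eqP; rewrite /d; field; rewrite gt_eqF // ltr_wpDl.
apply: ler_piMr; first exact: ltW.
by rewrite ler_pdivrMr ?ltr_wpDl // mul1r lerDl.
Qed.
Lemma wstar_mono {K : numFieldType} {X : normedModType K} (S T : set (X -> K)) :
  S `<=` T -> wstar_closure S `<=` wstar_closure T.
Proof.
move=> ST f [fd hf]; split => // m xs e e0.
by have [g [gS hg]] := hf m xs e e0; exists g; split => //; apply: ST.
Qed.

Lemma core {R : realType} {K : numFieldType} {nrm : K -> R} {emb : R -> K}
  (H : NrmOK nrm emb) {X : normedModType K} (A : nat -> nat -> R) (M : R)
  (B : set (X -> K)) (xs : nat -> X) (x : X) (L0 : R) :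
  (forall n k, 0 <= A n k) -> (forall n N, \sum_(k < N) A n k <= M) ->
  B `<=` dual_ball X -> I_generates B ->
  (forall k, nrm `|xs k| <= L0) ->
  (forall g, B g -> Zc (fun n => \sum_(k <oo) (A n k * nrm (g (xs k) - g x))%:E)) ->
  forall f, dual X f -> Zc (fun n => \sum_(k <oo) (A n k * nrm (f (xs k) - f x))%:E).
Proof.
move=> A0 hM BB hI hL hB f fd e e0.
have M0 := M_ge0 hM.
have [kap [kap0 hkap]] := dual_bound fd.
have [hl hc] := fd.
pose h := fun y => kap^-1 * f y.
have hd : dual_ball X h.
  split; first split.
  - by move=> a y z; rewrite /h hl mulrDr mulrCA.
  - by move=> y; apply: (@continuousM K X (fun=> kap^-1) f y); [exact: cst_continuous | exact: hc].
  - move=> y; rewrite /h normrM gtr0_norm ?invr_gt0 //.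
    by rewrite ler_pdivrMl // hkap.
set nk := nrm kap.
have nk0 : 0 <= nk by apply: (n_ge0 H).
set eps := e / (2 * (nk + 1)).
have eps0 : 0 < eps by rewrite divr_gt0 // mulr_gt0 // ltr_wpDl.
pose Bm := fun m : nat => [set g | B g /\ forall n, (m <= n)%N ->
   (\sum_(k <oo) (A n k * nrm (g (xs k) - g x))%:E <= eps%:E)%E].
have BU : B = \bigcup_m Bm m.
  apply/seteqP; split => g.
    move=> Bg; have [m _ hm] := hB g Bg eps eps0.
    by exists m => //; split.
  by move=> [m _ [Bg _]].
have := hI Bm BU; move=> hDB.
have : norm_closure (conv_hull (\bigcup_n wstar_cconv_hull (Bm n))) h by rewrite -hDB.
move=> [_ hcl].
set Lx := nrm `|x|.
have Lx0 : 0 <= Lx by apply: (n_ge0 H).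
have L00 : 0 <= L0 by apply: le_trans (hL 0%N); apply: (n_ge0 H).
set d := eps / ((M + 1) * (L0 + Lx + 1)).
have d0 : 0 < d by rewrite divr_gt0 // mulr_gt0 // ltr_wpDl // addr_ge0.
have [g [gS hg]] := hcl (emb d) (n_emb H d d0).
have : (\bigcup_m Cset nrm A xs x m eps) g.
  apply: (conv_union H _ _ _ _ A0).
  apply: conv_mono gS => g' [m _ hg'].
  exists m => //.
  apply: (wstar_C H _ _ _ _ _ M A0 hM).
  apply: wstar_mono hg' => g1 hg1.
  apply: (conv_C H _ _ _ _ _ A0).
  apply: conv_mono hg1 => g'' [_ hg''] n hn N.
  apply: sum_le_ser (hg'' n hn) => k.
  by rewrite mulr_ge0 // (n_ge0 H).
move=> [m0 _ hm0].
exists m0 => // n hn.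
apply: ser_le => [k|N]; first by rewrite mulr_ge0 // (n_ge0 H).
have hfh : forall y z, nrm (f y - f z) = nk * nrm (h y - h z).
  move=> y1 z1; rewrite /nk -(n_M H); congr nrm; rewrite /h; field; by rewrite gt_eqF.
have hgy : forall y, nrm (h y - g y) <= d * nrm `|y|.
  move=> y1; rewrite -(n_embE H d d0) -(n_M H); apply: (n_mono H).
  by rewrite normrM (gtr0_norm (n_emb H _ d0)) normr_id hg.
have hk : forall k, nrm (h (xs k) - h x) <= nrm (g (xs k) - g x) + d * (L0 + Lx).
  move=> k.
  have -> : h (xs k) - h x = (g (xs k) - g x) + ((h (xs k) - g (xs k)) - (h x - g x)).
    by ring.
  apply: le_trans; first exact: (n_D H).
  rewrite lerD2l; apply: le_trans; first exact: (n_B H).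
  rewrite mulrDr; apply: lerD; (apply: le_trans; first exact: hgy).
  - by rewrite ler_wpM2l // ltW.
  - by [].
apply: (@le_trans _ _ (nk * (eps + eps))).
  under eq_bigr do rewrite hfh mulrCA.
  rewrite -mulr_sumr ler_wpM2l //.
  apply: (@le_trans _ _ (\sum_(k < N) (A n k * nrm (g (xs k) - g x) + d * (L0 + Lx) * A n k))).
    apply: ler_sum => k _; rewrite [_ * A n k]mulrC -mulrDr ler_wpM2l //.
  rewrite big_split /= -mulr_sumr lerD //; first exact: hm0.
  apply: (@le_trans _ _ (d * (L0 + Lx) * M)).
    rewrite ler_wpM2l //; [exact: (mulr_ge0 (ltW d0) (addr_ge0 L00 Lx0)) | exact: hM].
  apply: (@le_trans _ _ (eps * ((L0 + Lx) / (L0 + Lx + 1) * (M / (M + 1))))).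
    rewrite le_eqVlt; apply/orP; left; apply/eqP; rewrite /d; field.
    by rewrite !gt_eqF // ?ltr_wpDl // addr_ge0.
  apply: ler_piMr; first exact: ltW.
  apply: mulr_ile1; rewrite ?divr_ge0 ?addr_ge0 //.
    by rewrite ler_pdivrMr ?ltr_wpDl ?addr_ge0 // mul1r lerDl.
  by rewrite ler_pdivrMr ?ltr_wpDl // mul1r lerDl.
apply: (@le_trans _ _ (e * (nk / (nk + 1)))).
  rewrite le_eqVlt; apply/orP; left; apply/eqP; rewrite /eps; field.
  by rewrite gt_eqF // ltr_wpDl.
apply: ler_piMr; first exact: ltW.
by rewrite ler_pdivrMr ?ltr_wpDl // mul1r lerDl.
Qed.
Lemma real_ok (R : realType) : NrmOK (fun z : R => `|z|) id.
Proof.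
split.
- by move=> u; rewrite normr_ge0.
- by move=> u v; apply: ler_normD.
- by [].
- by move=> u v; apply: normrM.
- by [].
- by move=> r r0; rewrite gtr0_norm.
- by move=> u v u0 v0; rewrite !ger0_norm // addr_ge0.
- by rewrite normr1.
- by rewrite normr0.
Qed.

Local Open Scope complex_scope.
Lemma nc (R : realType) (z : R[i]) : `|z| = (ComplexField.Normc.normc z)%:C.
Proof. by case: z => a b; rewrite normc_def. Qed.

Lemma Cinj (R : realType) (a b : R) : a%:C = b%:C -> a = b.
Proof. by move/(congr1 (@complex.Re R)). Qed.

Lemma CD (R : realType) (a b : R) : (a + b)%:C = a%:C + b%:C.
Proof. by apply/eqP; rewrite eq_complex /= addr0 !eqxx. Qed.

Lemma C0 (R : realType) : (0 : R)%:C = 0.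
Proof. by []. Qed.

Lemma complex_ok (R : realType) :
  NrmOK (@ComplexField.Normc.normc R) (fun r : R => r%:C).
Proof.
split.
- by move=> u; rewrite -lecR C0 -nc normr_ge0.
- by move=> u v; apply: le_normcD.
- by move=> u v; rewrite !nc lecR.
- by move=> u v; apply: ComplexField.Normc.normcM.
- by move=> r r0; rewrite -C0 ltcR.
- by move=> r r0; apply: Cinj; rewrite -nc gtr0_norm // -C0 ltcR.
- move=> u v u0 v0; apply: Cinj.
  by rewrite -nc CD -!nc !ger0_norm // addr_ge0.
- exact: ComplexField.Normc.normc1.
- exact: ComplexField.Normc.normc0.
Qed.
Local Open Scope ring_scope.
Definition St {R : realType} (A : nat -> nat -> R) (t : nat -> R) :=
  forall e, 0 < e -> Zc (fun n => \sum_(k <oo) (A n k * \1_[set j | e <= t j] k)%:E).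

Lemma strong_iff {R : realType} {K : zmodType} (nrm : K -> R) (A : nat -> nat -> R)
  (p : nat -> R) (s : nat -> K) (l : K) (M L c C : R) :
  (forall n k, 0 <= A n k) -> (forall n N, \sum_(k < N) A n k <= M) ->
  (forall k, 0 <= nrm (s k - l) <= L) -> 0 < c -> (forall k, c <= p k <= C) ->
  strong_Ap_cvg nrm A p s l <-> St A (fun k => nrm (s k - l)).
Proof.
move=> A0 hM ht c0 hp.
have hp' : forall k, 0 <= p k <= C.
  by move=> k; have /andP[cp ->] := hp k; rewrite (le_trans (ltW c0) cp).
have Tge0 : forall n, (0 <= \sum_(k <oo) (A n k * nrm (s k - l) `^ p k)%:E)%E.
  by move=> n; apply: ser_ge0 => k; rewrite mulr_ge0 // powR_ge0.
split.
  move=> [_ /(cvg0P Tge0) hZ].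
  apply: (SP_to_stat A0 _ hp' hZ) => k; by have /andP[] := ht k.
move=> hS; split.
  exact: (SP_fin A0 hM ht hp').
apply/(cvg0P Tge0); exact: (stat_to_SP A0 hM ht c0 hp hS).
Qed.

Lemma stat_iff {R : realType} {K : zmodType} (nrm : K -> R) (A : nat -> nat -> R)
  (s : nat -> K) (l : K) :
  (forall n k, 0 <= A n k) ->
  A_stat_cvg nrm A s l <-> St A (fun k => nrm (s k - l)).
Proof.
move=> A0; split => h e e0.
  apply/cvg0P; last exact: h.
  by move=> n; apply: ser_ge0 => k; rewrite mulr_ge0 // ind_ge0.
apply/cvg0P; last exact: h.
by move=> n; apply: ser_ge0 => k; rewrite mulr_ge0 // ind_ge0.
Qed.

Lemma S1_iff {R : realType} {A : nat -> nat -> R} {t : nat -> R} {M L : R} :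
  (forall n k, 0 <= A n k) -> (forall n N, \sum_(k < N) A n k <= M) ->
  (forall k, 0 <= t k <= L) ->
  Zc (fun n => \sum_(k <oo) (A n k * t k)%:E) <-> St A t.
Proof.
move=> A0 hM ht.
have E : (fun n => \sum_(k <oo) (A n k * t k `^ (fun _ => 1) k)%:E) =
         (fun n => \sum_(k <oo) (A n k * t k)%:E).
  apply: funext => n; congr (limn _); apply: funext => N.
  apply: eq_bigr => k _; rewrite powRr1 //; by have /andP[] := ht k.
have hp : forall k, 1 <= (fun _ : nat => (1 : R)) k <= 1 by move=> k; rewrite lexx.
have hp' : forall k, 0 <= (fun _ : nat => (1 : R)) k <= 1 by move=> k; rewrite ler01 lexx.
split.
  rewrite -E => h.
  apply: (SP_to_stat A0 _ hp' h) => k; by have /andP[] := ht k.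
move=> hS; rewrite -E; exact: (stat_to_SP A0 hM ht ltr01 hp hS).
Qed.
Lemma main_gen {R : realType} {K : numFieldType} {nrm : K -> R} {emb : R -> K}
  (H : NrmOK nrm emb) (X : normedModType K) (A : nat -> nat -> R)
  (B : set (X -> K)) (p : nat -> R) (xs : nat -> X) (x : X) :
  positive_matrix A -> regular A -> B `<=` dual_ball X -> I_generates B ->
  (exists c : R, 0 < c /\ forall k, c <= p k) -> (exists C : R, forall k, p k <= C) ->
  (exists M : K, forall k, `|xs k| <= M) ->
  ((forall f, dual X f -> strong_Ap_cvg nrm A p (fun k => f (xs k)) (f x)) <->
   (forall f, B f -> strong_Ap_cvg nrm A p (fun k => f (xs k)) (f x))) /\
  ((forall f, dual X f -> A_stat_cvg nrm A (fun k => f (xs k)) (f x)) <->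
   (forall f, B f -> A_stat_cvg nrm A (fun k => f (xs k)) (f x))).
Proof.
move=> A0 [[M0 hM0] _ _] BB hI [c [c0 hc]] [C hC] [Mx hMx].
have hM : forall n N, \sum_(k < N) A n k <= M0.
  move=> n N; apply: (@le_trans _ _ (\sum_(k < N) `|A n k|)); last exact: hM0.
  by apply: ler_sum => k _; rewrite ger0_norm.
have hp : forall k, c <= p k <= C by move=> k; rewrite hc hC.
have Mx0 : 0 <= Mx by apply: le_trans (hMx 0%N).
have hL0 : forall k, nrm `|xs k| <= nrm Mx.
  by move=> k; apply: (n_mono H); rewrite normr_id (ger0_norm Mx0).
have tb : forall f, dual X f -> exists L, forall k, 0 <= nrm (f (xs k) - f x) <= L.
  move=> f fd; have [kap [kap0 hkap]] := dual_bound fd.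
  have hf : forall y, nrm (f y) <= nrm kap * nrm `|y|.
    move=> y; rewrite -(n_M H); apply: (n_mono H).
    by rewrite normrM (gtr0_norm kap0) normr_id hkap.
  exists (nrm kap * nrm Mx + nrm kap * nrm `|x|) => k.
  rewrite (n_ge0 H) /=; apply: le_trans; first exact: (n_B H).
  apply: lerD => //; apply: le_trans (hf _) _.
  by rewrite ler_wpM2l ?(n_ge0 H).
have toS1 : forall g, B g -> strong_Ap_cvg nrm A p (fun k => g (xs k)) (g x) ->
    Zc (fun n => \sum_(k <oo) (A n k * nrm (g (xs k) - g x))%:E).
  move=> g hg hs; have [Lg hLg] := tb g (BB g hg).1.
  apply/(S1_iff A0 hM hLg).
  by apply/(strong_iff nrm A p (fun k => g (xs k)) (g x) M0 Lg c C A0 hM hLg c0 hp).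
have toS1' : forall g, B g -> A_stat_cvg nrm A (fun k => g (xs k)) (g x) ->
    Zc (fun n => \sum_(k <oo) (A n k * nrm (g (xs k) - g x))%:E).
  move=> g hg hs; have [Lg hLg] := tb g (BB g hg).1.
  apply/(S1_iff A0 hM hLg).
  by apply/(stat_iff nrm A (fun k => g (xs k)) (g x) A0).
split; split => h f hf.
- by apply: h; exact: (BB f hf).1.
- have [L hL] := tb f hf.
  apply/(strong_iff nrm A p (fun k => f (xs k)) (f x) M0 L c C A0 hM hL c0 hp).
  apply/(S1_iff A0 hM hL).
  apply: (core H A M0 B xs x (nrm Mx) A0 hM BB hI hL0 _ f hf).
  by move=> g hg; apply: toS1 hg (h g hg).
- by apply: h; exact: (BB f hf).1.
- have [L hL] := tb f hf.
  apply/(stat_iff nrm A (fun k => f (xs k)) (f x) A0).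
  apply/(S1_iff A0 hM hL).
  apply: (core H A M0 B xs x (nrm Mx) A0 hM BB hI hL0 _ f hf).
  by move=> g hg; apply: toS1' hg (h g hg).
Qed.
Local Close Scope ereal_scope.
Local Close Scope complex_scope.
Local Open Scope ring_scope.

Theorem corollary3p4 (R : realType) :
  (forall (X : completeNormedModType R) (A : nat -> nat -> R)
          (B : set (X -> R)) (p : nat -> R) (xs : nat -> X) (x : X),
    positive_matrix A -> regular A ->
    B `<=` dual_ball X -> I_generates B ->
    (exists c : R, 0 < c /\ forall k, c <= p k) ->
    (exists C : R, forall k, p k <= C) ->
    (exists M : R, forall k, `|xs k| <= M) ->
    ((forall f, dual X f ->
        strong_Ap_cvg (fun z : R => `|z|) A p (fun k => f (xs k)) (f x)) <->
     (forall f, B f ->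
        strong_Ap_cvg (fun z : R => `|z|) A p (fun k => f (xs k)) (f x)))
    /\
    ((forall f, dual X f ->
        A_stat_cvg (fun z : R => `|z|) A (fun k => f (xs k)) (f x)) <->
     (forall f, B f ->
        A_stat_cvg (fun z : R => `|z|) A (fun k => f (xs k)) (f x))))
  /\
  (forall (X : completeNormedModType R[i]) (A : nat -> nat -> R)
          (B : set (X -> R[i])) (p : nat -> R) (xs : nat -> X) (x : X),
    positive_matrix A -> regular A ->
    B `<=` dual_ball X -> I_generates B ->
    (exists c : R, 0 < c /\ forall k, c <= p k) ->
    (exists C : R, forall k, p k <= C) ->
    (exists M : R[i], forall k, `|xs k| <= M) ->
    ((forall f, dual X f ->
        strong_Ap_cvg (@ComplexField.Normc.normc R) A p (fun k => f (xs k)) (f x)) <->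
     (forall f, B f ->
        strong_Ap_cvg (@ComplexField.Normc.normc R) A p (fun k => f (xs k)) (f x)))
    /\
    ((forall f, dual X f ->
        A_stat_cvg (@ComplexField.Normc.normc R) A (fun k => f (xs k)) (f x)) <->
     (forall f, B f ->
        A_stat_cvg (@ComplexField.Normc.normc R) A (fun k => f (xs k)) (f x)))).
Proof.
split.
- move=> X A B p xs x; exact: (main_gen (real_ok R) X A B p xs x).
- move=> X A B p xs x; exact: (main_gen (complex_ok R) X A B p xs x).
Qed.
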